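(* Let $(G,R,x_I,x_G)$ be any instance of the multi-robot path planning problem on graphs. Algorithm TOMPP is complete: if the instance has a solution, TOMPP terminates and returns a solution, and otherwise it reports that no solution exists. Moreover, whenever a solution exists, the solution returned by TOMPP has minimum makespan among all solutions of the instance.
   Context: Multi-robot path planning on graphs: $G=(V,E)$ is a connected, undirected, simple graph; $R=\{r_1,\dots,r_n\}$ is a set of robots; $x_I,x_G:R\to V$ are injective maps (initial and goal locations). Let $\mathbb Z^+=\mathbb N\cup\{0\}$. A path is a map $p_i:\mathbb Z^+\to V$. It is feasible for robot $r_i$ if (1) $p_i(0)=x_I(r_i)$; (2) there is a smallest $k_i^{\min}\in\mathbb Z^+$ with $p_i(k)=x_G(r_i)$ for all $k\ge k_i^{\min}$; (3) for all $0\le k<k_i^{\min}$, either $(p_i(k),p_i(k+1))\in E$ or $p_i(k)=p_i(k+1)$. Two paths $p_i,p_j$ ($i\neq j$) collide if there is $k$ with $p_i(k)=p_j(k)$ or $(p_i(k),p_i(k+1))=(p_j(k+1),p_j(k))$. A solution is a set $P=\{p_1,\dots,p_n\}$ with each $p_i$ feasible for $r_i$ and no two paths colliding. Its makespan is $T_P=\max_i k_i^{\min}$. Time-expanded network for a natural number $T$: a directed graph $G'$ whose vertices are, for each $v\in V$, copies $v(0)=v(0)'$, $v(1),v(1)',v(2),v(2)',\dots,v(T),v(T)'$, together with gadget vertices described next. Edges (all of unit capacity): $(v(t),v(t)')$ for $1\le t\le T$ and $(v(t)',v(t+1))$ for $0\le t<T$, for each $v\in V$; for each edge $\{u,v\}\in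 E$ and each $0\le t<T$, two new vertices $a,b$ and edges $u(t)'\to a$, $v(t)'\to a$, $a\to b$, $b\to u(t+1)$, $b\to v(t+1)$; and $n$ loopback edges $e_1,\dots,e_n$, where $e_i$ goes from $x_G(r_i)(T)'$ to $x_I(r_i)(0)$. Index all edges of $G'$ as $e_1,e_2,\dots$ with the loopback edges first. The ILP for $T$ has binary variables $x_{i,j}$ ($1\le i\le n$, $e_j\in G'$), constraints $\sum_{i=1}^n x_{i,j}\le 1$ for every edge $e_j$, $x_{i,j}=0$ for $1\le i,j\le n$, $i\ne j$, and for every vertex $v$ of $G'$ and every $i$, $\sum_{e_j\text{ entering } v}x_{i,j}=\sum_{e_j\text{ leaving }v}x_{i,j}$; objective: maximize $\sum_{i=1}^n x_{i,i}$. Algorithm TOMPP: start with $T=\max_i d_G(x_I(r_i),x_G(r_i))$ (graph distance); build and solve the ILP for $T$; if the optimum equals $n$, output the paths obtained by letting robot $r_i$ be at vertex $v$ at time $t$ when the unit flow of commodity $i$ passes through $v(t)$ (and staying at its goal afterwards); otherwise increase $T$ by one and repeat, reporting that no solution exists once $T$ exceeds a bound (e.g., the number of joint configurations) beyond which no new solutions can appear. *)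

(* Defs.v *)
From mathcomp Require Import all_boot.
Set Implicit Arguments. Unset Strict Implicit. Unset Printing Implicit Defensive.

Section MRPP.
(* G = (V, e): a finite simple graph (e symmetric, irreflexive; connectivity is
   a hypothesis of the theorem); robots r_1..r_n are 'I_n; xI, xG : R -> V. *)
Variables (V : finType) (e : rel V) (n : nat) (xI xG : 'I_n -> V).

Definition is_kmin (p : nat -> V) (g : V) (k : nat) : Prop :=
  (forall k', k <= k' -> p k' = g) /\
  (forall k'', (forall k', k'' <= k' -> p k' = g) -> k <= k'').

Definition feasible_path (i : 'I_n) (p : nat -> V) : Prop :=
  p 0 = xI i /\
  exists kmin, is_kmin p (xG i) kmin /\
    forall k, k < kmin -> e (p k) (p k.+1) \/ p k = p k.+1.

Definition collide (p q : nat -> V) : Prop :=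
  exists k, p k = q k \/ (p k = q k.+1 /\ p k.+1 = q k).

Definition is_solution (P : 'I_n -> nat -> V) : Prop :=
  (forall i, feasible_path i (P i)) /\
  (forall i j : 'I_n, i != j -> ~ collide (P i) (P j)).

Definition has_makespan (P : 'I_n -> nat -> V) (T : nat) : Prop :=
  exists km : 'I_n -> nat,
    (forall i, is_kmin (P i) (xG i) (km i)) /\ T = \max_(i < n) km i.

Fixpoint walk (k : nat) (u v : V) : bool :=
  if k is k'.+1 then [exists w, e u w && walk k' w v] else u == v.

(* least k such that there is a walk of length k from u to v
   (for connected graphs it is always < #|V|) *)
Definition dist (u v : V) : nat := find (fun k => walk k u v) (iota 0 #|V|).

(* Nodes are encoded as (tag, u, v, t):
   tag 0 : v(t)   (as (0,v,v,t));  tag 1 : v(t)' for t >= 1 (as (1,v,v,t));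
   tag 2 : gadget vertex a of edge {u,v} at time t;  tag 3 : gadget vertex b. *)
Definition tnode := (nat * V * V * nat)%type.
Definition vin (v : V) (t : nat) : tnode := (0, v, v, t).
Definition vout (v : V) (t : nat) : tnode := if t == 0 then vin v 0 else (1, v, v, t).
Definition gA (u v : V) (t : nat) : tnode := (2, u, v, t).
Definition gB (u v : V) (t : nat) : tnode := (3, u, v, t).

(* each undirected edge {u,v} listed once, oriented by enum_rank *)
Definition gpairs : seq (V * V) :=
  [seq (u, v) | u <- enum V,
                v <- [seq w <- enum V | (enum_rank u < enum_rank w) && e u w]].

(* edges of G' for T, loopback edges first (e_1..e_n, e_i for robot r_i) *)
Definition ten_edges (T : nat) : seq (tnode * tnode) :=
  [seq (vout (xG i) T, vin (xI i) 0) | i <- enum 'I_n]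
  ++ [seq (vin v t, vout v t) | v <- enum V, t <- iota 1 T]
  ++ [seq (vout v t, vin v t.+1) | v <- enum V, t <- iota 0 T]
  ++ flatten [seq [:: (vout p.1 t, gA p.1 p.2 t); (vout p.2 t, gA p.1 p.2 t);
                     (gA p.1 p.2 t, gB p.1 p.2 t);
                     (gB p.1 p.2 t, vin p.1 t.+1); (gB p.1 p.2 t, vin p.2 t.+1)]
             | p <- gpairs, t <- iota 0 T].

Definition edge_of (T : nat) (j : 'I_(size (ten_edges T))) : tnode * tnode :=
  tnth (in_tuple (ten_edges T)) j.

(** * The ILP for T: binary variables x i j (commodity i, edge e_j) *)
Definition ilp_var (T : nat) := 'I_n -> 'I_(size (ten_edges T)) -> bool.

Definition inflow T (x : ilp_var T) (i : 'I_n) (w : tnode) : nat :=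
  \sum_(j < size (ten_edges T) | (edge_of j).2 == w) x i j.
Definition outflow T (x : ilp_var T) (i : 'I_n) (w : tnode) : nat :=
  \sum_(j < size (ten_edges T) | (edge_of j).1 == w) x i j.

Definition ilp_feasible T (x : ilp_var T) : Prop :=
  (forall j, \sum_(i < n) x i j <= 1) /\
  (forall (i : 'I_n) (j : 'I_(size (ten_edges T))), j < n -> val j != val i -> x i j = false) /\
  (forall (w : tnode) (i : 'I_n), inflow x i w = outflow x i w).

Definition ilp_value T (x : ilp_var T) : nat :=
  \sum_(i < n) \sum_(j < size (ten_edges T) | val j == val i) x i j.

Definition ilp_optimal T (x : ilp_var T) : Prop :=
  ilp_feasible x /\ forall y : ilp_var T, ilp_feasible y -> ilp_value y <= ilp_value x.

Definition extract T (x : ilp_var T) : 'I_n -> nat -> V :=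
  fun i t => if t <= T then odflt (xG i) [pick v | 0 < inflow x i (vin v t)]
             else xG i.

Definition T_start : nat := \max_(i < n) dist (xI i) (xG i).

(* number of joint configurations R -> V *)
Definition T_bound : nat := #|V| ^ n.

(* [solve T] is the (arbitrary) optimal ILP solution returned by the solver *)
Fixpoint tompp_run (solve : forall T, ilp_var T) (fuel T : nat)
  : option ('I_n -> nat -> V) :=
  if ilp_value (solve T) == n then Some (extract (solve T))
  else if fuel is f.+1 then tompp_run solve f T.+1 else None.

Definition tompp (solve : forall T, ilp_var T) : option ('I_n -> nat -> V) :=
  if T_start <= T_bound then tompp_run solve (T_bound - T_start) T_start else None.

End MRPP.

(* Main.v *)
Require Import Defs.
From mathcomp Require Import all_boot zify.
Set Implicit Arguments. Unset Strict Implicit. Unset Printing Implicit Defensive.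

Section Main.
Variables (V : finType) (e : rel V) (e_sym : symmetric e) (e_irr : irreflexive e).
Variables (n : nat) (xI xG : 'I_n -> V) (xI_inj : injective xI) (xG_inj : injective xG).

Local Notation s T := (ten_edges e xI xG T).
Definition tag (nd : tnode V) := nd.1.1.1.
Definition tim (nd : tnode V) := nd.2.

Definition cls (ed : tnode V * tnode V) : nat :=
  if (tag ed.2 == 0) && (tim ed.2 == 0) then 0
  else if tag ed.2 == 1 then 1
  else if (tag ed.1 <= 1) && (tag ed.2 == 0) then 2 else 3.

Lemma tag_vout v t : tag (vout v t) <= 1.
Proof. by rewrite /vout; case: (t == 0). Qed.
Lemma tim_vout v t : tim (vout v t) = t.
Proof. by rewrite /vout; case: eqP => [->|]. Qed.

Definition lb T (i : 'I_n) := (vout (xG i) T, vin (xI i) 0).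
Definition W1 T := [seq (vin v t, vout v t) | v <- enum V, t <- iota 1 T].
Definition W2 T := [seq (vout v t, vin v t.+1) | v <- enum V, t <- iota 0 T].
Definition gblk (p : V * V) t := [:: (vout p.1 t, gA p.1 p.2 t); (vout p.2 t, gA p.1 p.2 t);
                     (gA p.1 p.2 t, gB p.1 p.2 t);
                     (gB p.1 p.2 t, vin p.1 t.+1); (gB p.1 p.2 t, vin p.2 t.+1)].
Definition GG T := flatten [seq gblk p t | p <- gpairs e, t <- iota 0 T].

Lemma sE T : s T = map (lb T) (enum 'I_n) ++ W1 T ++ W2 T ++ GG T.
Proof. by []. Qed.

Lemma uniq_catI (A : eqType) (a b : seq A) :
  uniq a -> uniq b -> (forall x, x \in a -> x \in b -> False) -> uniq (a ++ b).
Proof.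
move=> ua ub H; rewrite cat_uniq ua ub andbT /=; apply/hasPn => x xb.
by apply/negP => xa; apply: (H x).
Qed.

Lemma gpairsP u w : (u, w) \in gpairs e = (enum_rank u < enum_rank w) && e u w.
Proof.
apply/idP/idP.
- case/allpairsPdep => a [b [_]]; rewrite mem_filter => /andP[H _] [-> ->] //.
- move=> H; apply/allpairsPdep; exists u, w; split => //; first by rewrite mem_enum.
  by rewrite mem_filter H mem_enum.
Qed.

Lemma uniq_gpairs : uniq (gpairs e).
Proof.
apply: allpairs_uniq_dep; first exact: enum_uniq.
- by move=> x _; apply: filter_uniq; apply: enum_uniq.
- by move=> [a b] [c d] _ _ /= [->]; move=> H; move: b d H => b d <-.
Qed.

Lemma GGP T ed : ed \in GG T <-> exists p t, [/\ p \in gpairs e, t < T & ed \in gblk p t].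
Proof.
split.
- case/flattenP => bl /allpairsP [[p t] [/= pin tin ->]] edin.
  by exists p, t; rewrite mem_iota in tin; split.
- case=> p [t [pin tlt edin]]; apply/flattenP; exists (gblk p t) => //.
  by apply/allpairsP; exists (p, t); rewrite mem_iota.
Qed.

Lemma gpair_neq p : p \in gpairs e -> p.1 != p.2.
Proof.
case: p => u w; rewrite gpairsP => /andP[H _] /=; apply/eqP => E.
by move: H; rewrite E ltnn.
Qed.

Lemma uniq_flatten_key (A B : eqType) (L : seq (seq A)) (key : A -> B) (bk : seq A -> B) :
  (forall bl, bl \in L -> uniq bl) -> (forall bl z, bl \in L -> z \in bl -> key z = bk bl) ->
  uniq (map bk L) -> uniq (flatten L).
Proof.
elim: L => //= bl L IH Hu Hk /andP [nin uL].
apply: uniq_catI.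
- by apply: Hu; rewrite inE eqxx.
- apply: IH => // [bl' H|bl' z H]; [apply: Hu | apply: Hk]; by rewrite inE H orbT.
- move=> z zbl /flattenP [bl' bl'L zbl'].
  have E1 := Hk bl z (mem_head _ _) zbl.
  have E2 : key z = bk bl' by apply: Hk => //; rewrite inE bl'L orbT.
  by move: nin; rewrite -E1 E2 map_f.
Qed.

Lemma map_allpairs' (A B C D : Type) (F : C -> D) (f : A -> B -> C) l1 l2 :
  map F [seq f x y | x <- l1, y <- l2] = [seq F (f x y) | x <- l1, y <- l2].
Proof. by elim: l1 => //= a l1 IH; rewrite map_cat IH -map_comp. Qed.

Definition gkey (ed : tnode V * tnode V) :=
  let nd := if tag ed.2 == 2 then ed.2 else ed.1 in (nd.1.1.2, nd.1.2, nd.2).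

Lemma uniq_gblk p t : p \in gpairs e -> uniq (gblk p t).
Proof.
move=> /gpair_neq /negbTE H.
by case: t => [|t]; rewrite /gblk /vout /= !inE !xpair_eqE /= H /= !andbF.
Qed.

Lemma uniq_GG T : uniq (GG T).
Proof.
apply: (@uniq_flatten_key _ _ _ (fun z => Some (gkey z)) (fun bl => omap gkey (ohead bl))).
- by move=> bl /allpairsP [[p t] [/= pin _ ->]]; apply: uniq_gblk.
- move=> bl z /allpairsP [[p t] [/= pin _ ->]]; rewrite !inE.
  by case/orP=>[/eqP->|/orP[/eqP->|/orP[/eqP->|/orP[/eqP->|/eqP->]]]]; rewrite /gkey /= ?tag_vout;
    case: (t) => [|tt].
- rewrite map_allpairs'.
  apply: allpairs_uniq; rewrite ?uniq_gpairs ?iota_uniq //.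
  move=> [[u w] t] [[u' w'] t'] _ _.
  by case: t => [|t]; case: t' => [|t']; rewrite /vout /gkey /= => -[*]; subst.
Qed.

Lemma uniq_s T : uniq (s T).
Proof.
rewrite sE.
have cL : forall ed, ed \in map (lb T) (enum 'I_n) -> cls ed = 0.
  by move=> ed /mapP [i _ ->].
have cW1 : forall ed, ed \in W1 T -> cls ed = 1.
  move=> ed /allpairsP [[v t] [/= _ tin ->]]; rewrite mem_iota in tin.
  have /negbTE H : t != 0 by lia.
  by rewrite /cls /= /vout H.
have cW2 : forall ed, ed \in W2 T -> cls ed = 2.
  move=> ed /allpairsP [[v t] [/= _ tin ->]].
  by rewrite /cls /= tag_vout.
have cG : forall ed, ed \in GG T -> cls ed = 3.
  move=> ed /GGP [p [t [_ _]]]; rewrite !inE.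
  by case/orP=>[/eqP->|/orP[/eqP->|/orP[/eqP->|/orP[/eqP->|/eqP->]]]]; rewrite /cls /= ?tag_vout.
apply: uniq_catI.
- rewrite map_inj_uniq ?enum_uniq // => i j [_ /xI_inj] //.
- apply: uniq_catI.
  + apply: allpairs_uniq; rewrite ?enum_uniq ?iota_uniq //.
    by move=> [v t] [v' t'] _ _ /= [*]; subst.
  + apply: uniq_catI.
    * apply: allpairs_uniq; rewrite ?enum_uniq ?iota_uniq //.
      by move=> [v t] [v' t'] _ _ /= [*]; subst.
    * exact: uniq_GG.
    * by move=> ed /cW2 E /cG; rewrite E.
  + by move=> ed /cW1 E; rewrite mem_cat => /orP [/cW2|/cG]; rewrite E.
- by move=> ed /cL E; rewrite !mem_cat => /or3P [/cW1|/cW2|/cG]; rewrite E.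
Qed.

Lemma voutE (v : V) t : vout v t = ((t != 0 : nat), v, v, t).
Proof. by rewrite /vout; case: eqP => [->|]. Qed.

Lemma memsP T ed : ed \in s T <->
  (exists k : 'I_n, ed = lb T k) \/
  (exists v t, 0 < t <= T /\ ed = (vin v t, vout v t)) \/
  (exists v t, t < T /\ ed = (vout v t, vin v t.+1)) \/
  (exists p t, [/\ p \in gpairs e, t < T & ed \in gblk p t]).
Proof.
rewrite sE !mem_cat; split.
- case/or4P.
  + by case/mapP => k _ ->; left; exists k.
  + case/allpairsP => [[v t] [/= _ tin ->]]; right; left; exists v, t.
    by rewrite mem_iota in tin; split => //; lia.
  + case/allpairsP => [[v t] [/= _ tin ->]]; right; right; left; exists v, t.
    by rewrite mem_iota in tin; split => //; lia.
  + by move/GGP => H; right; right; right.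
- case=> [[k ->]|[[v [t [Ht ->]]]|[[v [t [Ht ->]]]|H]]].
  + by rewrite map_f ?mem_enum.
  + apply/orP; right; apply/orP; left; apply/allpairsP; exists (v, t).
    by rewrite /= mem_enum mem_iota; split => //; lia.
  + apply/orP; right; apply/orP; right; apply/orP; left; apply/allpairsP; exists (v, t).
    by rewrite /= mem_enum mem_iota; split => //; lia.
  + by apply/orP; right; apply/orP; right; apply/orP; right; apply/GGP.
Qed.

Lemma gblkP p t ed : ed \in gblk p t <->
  [\/ ed = (vout p.1 t, gA p.1 p.2 t), ed = (vout p.2 t, gA p.1 p.2 t),
      ed = (gA p.1 p.2 t, gB p.1 p.2 t) |
      ed = (gB p.1 p.2 t, vin p.1 t.+1) \/ ed = (gB p.1 p.2 t, vin p.2 t.+1)].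
Proof.
rewrite /gblk !inE; split.
- by case/orP=>[/eqP->|/orP[/eqP->|/orP[/eqP->|/orP[/eqP->|/eqP->]]]];
    [apply: Or41|apply: Or42|apply: Or43|apply: Or44; left|apply: Or44; right].
- by case=> [->|->|->|[->|->]]; rewrite eqxx ?orbT.
Qed.

Lemma sum_edges T (P f : pred (tnode V * tnode V)) :
  \sum_(j < size (s T) | P (edge_of j)) f (edge_of j) = count (fun ed => P ed && f ed) (s T).
Proof.
rewrite /edge_of -(big_tnth 0 addn (s T) P (fun ed => nat_of_bool (f ed))).
elim: (s T) => [|a l IH]; first by rewrite big_nil.
by rewrite big_cons /= -IH; case: (P a); case: (f a).
Qed.

Lemma count_sub (A : eqType) (l E : seq A) (P : pred A) :
  uniq l -> uniq E -> {subset E <= l} ->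
  count (fun z => P z && (z \in E)) l = count P E.
Proof.
move=> ul uE sub.
have -> : count (fun z => P z && (z \in E)) l = count P [seq z <- l | z \in E].
  by rewrite count_filter.
apply/permP/uniq_perm; rewrite ?filter_uniq // => z.
by rewrite mem_filter andb_idr //; apply: sub.
Qed.

Lemma sum_le1 (F : 'I_n -> bool) : (forall i k, F i -> F k -> i = k) -> \sum_i F i <= 1.
Proof.
move=> H; case: (pickP F) => [i Fi|none].
- rewrite (bigD1 i) //= big1 ?Fi // => k; case Fk: (F k) => //.
  by rewrite (H _ _ Fk Fi) eqxx.
- by rewrite big1 // => k _; rewrite none.
Qed.

Lemma size_s T : n <= size (s T).
Proof. by rewrite sE size_cat size_map size_enum_ord leq_addr. Qed.

Lemma nth_s_lb T d m (hm : m < n) : nth d (s T) m = lb T (Ordinal hm).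
Proof.
rewrite sE nth_cat size_map size_enum_ord hm.
rewrite (nth_map (Ordinal hm)) ?size_enum_ord //; congr lb.
by apply: val_inj; rewrite /= nth_enum_ord.
Qed.

Lemma edge_of_lb T (j : 'I_(size (s T))) (jn : j < n) :
  edge_of j = lb T (Ordinal jn).
Proof.
by rewrite /edge_of (tnth_nth (lb T (Ordinal jn))) /= nth_s_lb.
Qed.


(** * Part A : from paths to a flow *)
Definition ori (u w : V) := if enum_rank u < enum_rank w then (u, w) else (w, u).

Lemma ori_cases u w : ori u w = (u, w) \/ ori u w = (w, u).
Proof. by rewrite /ori; case: ifP; [left|right]. Qed.

Lemma ori_eq a b c d : ori a b = ori c d -> (a = c /\ b = d) \/ (a = d /\ b = c).
Proof.
by case: (ori_cases a b) => ->; case: (ori_cases c d) => -> [-> ->]; auto.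
Qed.

Lemma ori_in u w : u != w -> e u w -> ori u w \in gpairs e.
Proof.
move=> uw euw; rewrite /ori; case: ltnP => H; rewrite gpairsP ?H ?euw //.
rewrite e_sym euw andbT ltn_neqAle H andbT.
apply/negP => /eqP E; have E' := enum_rank_inj (val_inj E); by rewrite E' eqxx in uw.
Qed.

Section PathFlow.
Variables (T : nat) (q : nat -> V).

Definition mvp t := (t < T) && (q t != q t.+1).
Definition gad t := [:: gA (ori (q t) (q t.+1)).1 (ori (q t) (q t.+1)).2 t;
                        gB (ori (q t) (q t.+1)).1 (ori (q t) (q t.+1)).2 t].
Definition rest t := (if t == 0 then [::] else [:: vout (q t) t]) ++ (if mvp t then gad t else [::]).
Definition nxt t := if t < T then vin (q t.+1) t.+1 else vin (q 0) 0.
Definition blk t := vin (q t) t :: rest t.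
Definition eblk t := zip (blk t) (rcons (rest t) (nxt t)).
Definition EE := flatten [seq eblk t | t <- iota 0 T.+1].
Definition NS := flatten [seq blk t | t <- iota 0 T.+1].

Lemma unzip1_EE : unzip1 EE = NS.
Proof.
rewrite /EE /NS /unzip1 map_flatten -map_comp; congr flatten; apply: eq_map => t /=.
by apply: unzip1_zip; rewrite size_rcons.
Qed.

Lemma tim_blk t nd : nd \in blk t -> tim nd = t.
Proof.
rewrite /blk /rest inE mem_cat => /orP [/eqP->//|/orP[]].
- by case: eqP => // _; rewrite inE => /eqP ->; rewrite tim_vout.
- by case: (mvp t); rewrite // !inE => /orP [] /eqP ->.
Qed.

Lemma uniq_blk t : uniq (blk t).
Proof.
apply: (@map_uniq _ _ tag); rewrite /blk /rest /gad.
by case: (mvp t); case: eqP => [->|/eqP nz] //=; rewrite ?voutE /= ?nz.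
Qed.

Lemma uniq_NS : uniq NS.
Proof.
apply: (@uniq_flatten_key _ _ _ (fun nd => Some (tim nd)) (fun bl => omap tim (ohead bl))).
- by move=> bl /mapP [t _ ->]; apply: uniq_blk.
- by move=> bl z /mapP [t _ ->] /tim_blk ->.
- rewrite -map_comp (@eq_map _ _ _ Some) ?(map_inj_uniq (@Some_inj _)) ?iota_uniq //.
Qed.

Lemma uniq_EE : uniq EE.
Proof. by apply: (@map_uniq _ _ fst); rewrite -/(unzip1 EE) unzip1_EE uniq_NS. Qed.

Lemma count_flatten_map (A B : Type) (a : pred A) (F : B -> seq A) l :
  count a (flatten [seq F t | t <- l]) = \sum_(t <- l) count a (F t).
Proof. by elim: l => [|b l IH]; rewrite ?big_nil ?big_cons //= count_cat IH. Qed.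

Lemma EE_conserv w :
  count (fun ed => ed.2 == w) EE = count (fun ed => ed.1 == w) EE.
Proof.
rewrite /EE !count_flatten_map.
have E2 : forall t, count (fun ed => ed.2 == w) (eblk t) = count (pred1 w) (rest t) + (nxt t == w).
  move=> t; rewrite /eblk -(count_map snd (pred1 w)) -[map snd _]/(unzip2 _) unzip2_zip ?size_rcons //.
  by rewrite -cats1 count_cat /= addn0.
have E1 : forall t, count (fun ed => ed.1 == w) (eblk t) = (vin (q t) t == w) + count (pred1 w) (rest t).
  move=> t; rewrite /eblk -(count_map fst (pred1 w)) -[map fst _]/(unzip1 _) unzip1_zip ?size_rcons //.
have HH : \sum_(t <- iota 0 T.+1) (nxt t == w) = \sum_(t <- iota 0 T.+1) (vin (q t) t == w).
  rewrite -/(index_iota 0 T.+1) big_nat_recr // big_nat_recl //.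
  rewrite /nxt ltnn addnC; congr addn.
  by apply: eq_big_nat => t /andP [_ ->].
by rewrite (eq_bigr _ (fun t _ => E2 t)) (eq_bigr _ (fun t _ => E1 t)) !big_split /= HH addnC.
Qed.

Lemma NSP nd : nd \in NS -> exists t, [/\ t <= T, tim nd = t,
   (tag nd <= 1 -> nd.1.1.2 = q t) &
   (1 < tag nd -> mvp t /\ (nd.1.1.2, nd.1.2) = ori (q t) (q t.+1))].
Proof.
case/flatten_mapP => t; rewrite mem_iota add0n ltnS => tT ndb; exists t; split => //.
- exact: tim_blk.
- move: ndb; rewrite /blk /rest inE mem_cat => /orP [/eqP->//|/orP[]].
  + by case: eqP => // _; rewrite inE => /eqP ->; rewrite voutE.
  + by case: (mvp t); rewrite // !inE => /orP [] /eqP ->.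
- move: ndb; rewrite /blk /rest inE mem_cat => /orP [/eqP->//|/orP[]].
  + by case: eqP => // _; rewrite inE => /eqP ->; rewrite voutE /tag /=; case: (t != 0).
  + by case M: (mvp t); rewrite // !inE => /orP [] /eqP -> _; split => //; case: (ori _ _).
Qed.

End PathFlow.


Lemma inW1 T v t : 0 < t <= T -> (vin v t, vout v t) \in s T.
Proof. by move=> H; apply/memsP; right; left; exists v, t. Qed.
Lemma inW2 T v t : t < T -> (vout v t, vin v t.+1) \in s T.
Proof. by move=> H; apply/memsP; right; right; left; exists v, t. Qed.
Lemma inLB T k : lb T k \in s T.
Proof. by apply/memsP; left; exists k. Qed.

Section PathHyp.
Variables (T : nat) (i : 'I_n) (q : nat -> V).
Hypotheses (q0 : q 0 = xI i) (qmv : forall k, e (q k) (q k.+1) \/ q k = q k.+1)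
  (qT : forall k, T <= k -> q k = xG i).

Lemma gad_in t : t < T -> q t != q t.+1 ->
  [/\ (vout (q t) t, gA (ori (q t) (q t.+1)).1 (ori (q t) (q t.+1)).2 t) \in s T,
      (gA (ori (q t) (q t.+1)).1 (ori (q t) (q t.+1)).2 t,
       gB (ori (q t) (q t.+1)).1 (ori (q t) (q t.+1)).2 t) \in s T &
      (gB (ori (q t) (q t.+1)).1 (ori (q t) (q t.+1)).2 t, vin (q t.+1) t.+1) \in s T].
Proof.
move=> tT nq.
have eq : e (q t) (q t.+1) by case: (qmv t) => // E; rewrite E eqxx in nq.
have oin := ori_in nq eq.
have H : forall ed, ed \in gblk (ori (q t) (q t.+1)) t -> ed \in s T.
  by move=> ed edin; apply/memsP; right; right; right; exists (ori (q t) (q t.+1)), t.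
split; apply: H; apply/gblkP; case: (ori_cases (q t) (q t.+1)) => -> /=.
- by apply: Or41.
- by apply: Or42.
- by apply: Or43.
- by apply: Or43.
- by apply: Or44; right.
- by apply: Or44; left.
Qed.

Lemma EE_sub : {subset EE T q <= s T}.
Proof.
move=> ed /flatten_mapP [t]; rewrite mem_iota add0n ltnS => tT.
rewrite /eblk /blk /rest /nxt.
case M: (mvp T q t).
- move: M; rewrite /mvp => /andP [tT' nq].
  case: (gad_in tT' nq) => H1 H2 H3.
  rewrite tT'; case: t tT tT' nq H1 H2 H3 => [|t] tT tT' nq H1 H2 H3 /=; rewrite !inE.
  + by case/orP => [/eqP->|/orP [/eqP->|/eqP->]].
  + case/orP => [/eqP->|/orP [/eqP->|/orP [/eqP->|/eqP->]]] //.
    by apply: inW1; lia.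
- move: M; rewrite /mvp; case: ltnP => tT' /=.
  + move/negbFE/eqP => E.
    case: t tT tT' E => [|t] tT tT' E /=; rewrite !inE.
    * by move/eqP ->; rewrite -E; apply: (inW2 (q 0) tT').
    * case/orP => [/eqP->|/eqP->]; first by apply: inW1; lia.
      by rewrite -E; apply: inW2.
  + move=> _; have tE : t = T by move: tT tT'; clear; lia.
    subst t; move: tT tT' qT; case: T => [|T'] tT tT' qT' /=; rewrite !inE.
    * move/eqP ->; have := inLB 0 i; rewrite /lb -q0 -(qT' 0) //.
    * case/orP => [/eqP->|/eqP->]; first by apply: inW1; lia.
      by have := inLB T'.+1 i; rewrite /lb -q0 -(qT' T'.+1).
Qed.

Lemma lb_EE : lb T i \in EE T q.
Proof.
apply/flatten_mapP; exists T; first by rewrite mem_iota add0n ltnS leqnn.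
rewrite /eblk /blk /rest /nxt /mvp ltnn /=.
move: qT; case: T => [|T'] qT' /=; rewrite /lb -q0.
- by rewrite -(qT' 0) // inE.
- by rewrite -(qT' T'.+1) // !inE eqxx orbT.
Qed.

End PathHyp.


Section Flow.
Variables (T : nat) (q : 'I_n -> nat -> V).
Hypotheses (hq0 : forall i, q i 0 = xI i)
  (hqmv : forall i k, e (q i k) (q i k.+1) \/ q i k = q i k.+1)
  (hqT : forall i k, T <= k -> q i k = xG i)
  (hcol : forall i k, i != k -> ~ collide (q i) (q k)).

Lemma NS_disj i k nd : nd \in NS T (q i) -> nd \in NS T (q k) -> i = k.
Proof.
case/NSP => t [_ tt Hv1 Hg1]; case/NSP => t' [_ tt' Hv2 Hg2].
move: tt'; rewrite tt => tt'; subst t'.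
case: (i =P k) => // /eqP nik; exfalso; apply: (hcol nik).
case: (leqP (tag nd) 1) => tg.
- by exists t; left; rewrite -(Hv1 tg) -(Hv2 tg).
- case: (Hg1 tg) => /andP [_ n1] E1; case: (Hg2 tg) => /andP [_ n2] E2.
  case: (ori_eq (etrans (esym E1) E2)) => [[a _]|[a b]]; exists t; first by left.
  by right.
Qed.

Definition yflow : ilp_var e xI xG T := fun i j => edge_of j \in EE T (q i).

Lemma EE_NS i ed : ed \in EE T (q i) -> ed.1 \in NS T (q i).
Proof. by move=> H; rewrite -unzip1_EE; apply: map_f. Qed.

Lemma yflow_feasible : ilp_feasible yflow.
Proof.
split; [|split].
- move=> j; apply: sum_le1 => i k Hi Hk.
  exact: (NS_disj (EE_NS Hi) (EE_NS Hk)).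
- move=> i j jn nji; apply/negP; rewrite /yflow (edge_of_lb jn) => /EE_NS.
  case/NSP => t [_ tt Hv _].
  move: tt; rewrite /lb /= tim_vout => tt; subst t.
  have := Hv (tag_vout _ _); rewrite /lb /= voutE /= hqT // => /xG_inj E.
  by move: nji; rewrite -E /= eqxx.
- move=> w i; rewrite /inflow /outflow /yflow.
  rewrite (@sum_edges T (fun ed => ed.2 == w) (fun ed => ed \in EE T (q i))).
  rewrite (@sum_edges T (fun ed => ed.1 == w) (fun ed => ed \in EE T (q i))).
  rewrite (@count_sub _ _ _ (fun ed => ed.2 == w)) ?(@count_sub _ _ _ (fun ed => ed.1 == w)) ?uniq_s ?uniq_EE //;
    try (apply: EE_sub; [exact: hq0|exact: hqmv|exact: hqT]).
  by rewrite EE_conserv.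
Qed.

Lemma yflow_value : ilp_value yflow = n.
Proof.
rewrite /ilp_value -[RHS]card_ord -sum1_card; apply: eq_bigr => i _.
have ilt : i < size (ten_edges e xI xG T) by apply: leq_trans (ltn_ord i) (size_s T).
rewrite (big_pred1 (Ordinal ilt)) => [|j]; last by rewrite /= -val_eqE.
have iln : Ordinal ilt < n by exact: (ltn_ord i).
rewrite /yflow (edge_of_lb iln).
have -> : Ordinal iln = i by apply: val_inj.
by rewrite (@lb_EE T i (q i) (hq0 i) (hqT i)).
Qed.

End Flow.


(** * Part B : from a flow to paths *)
Definition lev (nd : tnode V) := 4 * tim nd + tag nd.

Lemma count_split (A : Type) (p r : pred A) l :
  count p l = count (fun z => p z && r z) l + count (fun z => p z && ~~ r z) l.
Proof. by elim: l => //= a l ->; case: (p a); case: (r a) => //=; rewrite addnCA. Qed.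

Lemma count_one (A : eqType) (p : pred A) l a :
  uniq l -> a \in l -> p a -> (forall z, z \in l -> p z -> z = a) -> count p l = 1.
Proof.
move=> ul al pa H; rewrite (@eq_in_count _ _ (pred1 a)) ?count_uniq_mem ?al //.
move=> z zl /=; apply/idP/eqP => [/(H _ zl)//|->//].
Qed.

Lemma count_two (A : eqType) (p : pred A) l a b :
  a != b -> a \in l -> b \in l -> p a -> p b -> 2 <= count p l.
Proof.
move=> ab al bl pa pb; rewrite (count_split _ (pred1 a)).
have h1 : 0 < count (fun z => p z && pred1 a z) l by rewrite -has_count; apply/hasP; exists a; rewrite //= pa eqxx.
have h2 : 0 < count (fun z => p z && ~~ pred1 a z) l.
  by rewrite -has_count; apply/hasP; exists b; rewrite //= pb eq_sym ab.
lia.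
Qed.

Lemma sum_ge2 (F : 'I_n -> bool) i k : i != k -> F i -> F k -> 2 <= \sum_l F l.
Proof.
move=> ik Fi Fk; rewrite (bigD1 i) //= (bigD1 k) /=; last by rewrite eq_sym ik.
by rewrite Fi Fk.
Qed.

Lemma sum_all (F : 'I_n -> bool) : \sum_l F l = n -> forall i, F i.
Proof.
move=> H i.
have : \sum_l F l = \sum_(l | F l) 1.
  by rewrite [RHS]big_mkcond /=; apply: eq_bigr => l _; case: (F l).
rewrite sum1_card H => /esym Hc.
have : [pred l | F l] =i 'I_n.
  apply/subset_cardP; first by rewrite Hc card_ord.
  by apply/subsetP.
by move/(_ i); rewrite !inE.
Qed.

Ltac inj H := rewrite /= /lb /vin /gA /gB ?voutE /= in H; case: H => *; subst.

Lemma src_vout T ed v t : ed \in s T -> ed.1 = vout v t -> t < T ->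
  ed = (vout v t, vin v t.+1) \/
  exists p, [/\ p \in gpairs e, v = p.1 \/ v = p.2 & ed = (vout v t, gA p.1 p.2 t)].
Proof.
case/memsP => [[k ->]|[[v' [t' [Ht ->]]]|[[v' [t' [Ht ->]]]|[p [t' [pin Ht /gblkP H]]]]]] E tT.
- by inj E; lia.
- by inj E; lia.
- by inj E; left.
- move: E; case: H => [->|->|->|[->|->]] E; inj E; try lia.
  + by right; exists p; split => //; left.
  + by right; exists p; split => //; right.
Qed.


Lemma src_vin_pos T ed v t : ed \in s T -> ed.1 = vin v t -> 0 < t -> ed = (vin v t, vout v t).
Proof.
case/memsP => [[k ->]|[[v' [t' [Ht ->]]]|[[v' [t' [Ht ->]]]|[p [t' [pin Ht /gblkP H]]]]]] E tT.
- by inj E; lia.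
- by inj E.
- by inj E; lia.
- by move: E; case: H => [->|->|->|[->|->]] E; inj E; lia.
Qed.

Lemma src_gA T ed u w t : ed \in s T -> ed.1 = gA u w t ->
  ed = (gA u w t, gB u w t) /\ (u, w) \in gpairs e.
Proof.
case/memsP => [[k ->]|[[v' [t' [Ht ->]]]|[[v' [t' [Ht ->]]]|[p [t' [pin Ht /gblkP H]]]]]] E.
- by inj E; lia.
- by inj E.
- by inj E; lia.
- move: E; case: H => [->|->|->|[->|->]] E; inj E; try lia.
  by case: p pin.
Qed.

Lemma src_gB T ed u w t : ed \in s T -> ed.1 = gB u w t ->
  ed = (gB u w t, vin u t.+1) \/ ed = (gB u w t, vin w t.+1).
Proof.
case/memsP => [[k ->]|[[v' [t' [Ht ->]]]|[[v' [t' [Ht ->]]]|[p [t' [pin Ht /gblkP H]]]]]] E.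
- by inj E; lia.
- by inj E.
- by inj E; lia.
- by move: E; case: H => [->|->|->|[->|->]] E; inj E; try lia; [left|right].
Qed.

Lemma tgt_vout T ed v t : ed \in s T -> ed.2 = vout v t -> 0 < t -> ed = (vin v t, vout v t).
Proof.
case/memsP => [[k ->]|[[v' [t' [Ht ->]]]|[[v' [t' [Ht ->]]]|[p [t' [pin Ht /gblkP H]]]]]] E tT.
- by inj E; lia.
- by inj E.
- by inj E; lia.
- by move: E; case: H => [->|->|->|[->|->]] E; inj E; lia.
Qed.

Lemma tgt_vin0 T ed v : ed \in s T -> ed.2 = vin v 0 -> exists k, ed = lb T k.
Proof.
case/memsP => [[k ->]|[[v' [t' [Ht ->]]]|[[v' [t' [Ht ->]]]|[p [t' [pin Ht /gblkP H]]]]]] E.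
- by exists k.
- by inj E; lia.
- by inj E; lia.
- by move: E; case: H => [->|->|->|[->|->]] E; inj E; lia.
Qed.

Lemma s0_lb ed : ed \in s 0 -> exists k, ed = lb 0 k.
Proof.
case/memsP => [[k ->]|[[v' [t' [Ht ->]]]|[[v' [t' [Ht ->]]]|[p [t' [pin Ht /gblkP H]]]]]].
- by exists k.
- lia.
- lia.
- lia.
Qed.

Lemma lev_up T ed : ed \in s T -> (exists k, ed = lb T k) \/ lev ed.1 < lev ed.2.
Proof.
case/memsP => [[k ->]|[[v' [t' [Ht ->]]]|[[v' [t' [Ht ->]]]|[p [t' [pin Ht /gblkP H]]]]]].
- by left; exists k.
- by right; rewrite /lev /= voutE /tag /tim /=; lia.
- by right; rewrite /lev /= voutE /tag /tim /=; lia.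
- by right; case: H => [->|->|->|[->|->]]; rewrite /lev /= ?voutE /tag /tim /=; lia.
Qed.


Section Extract.
Variables (T : nat) (x : ilp_var e xI xG T).
Hypotheses (hxf : ilp_feasible x) (hxv : ilp_value x = n).

Definition U i ed := [exists j, x i j && (edge_of j == ed)].

Lemma edge_of_inj : injective (@edge_of _ e _ xI xG T).
Proof. by apply/tuple_uniqP; rewrite /= uniq_s. Qed.

Lemma x_U i j : x i j = U i (edge_of j).
Proof.
apply/idP/existsP => [H|[j' /andP [H /eqP E]]]; first by exists j; rewrite H eqxx.
by rewrite -(edge_of_inj E).
Qed.

Lemma U_s i ed : U i ed -> ed \in s T.
Proof. by case/existsP => j /andP [_ /eqP <-]; rewrite /edge_of mem_tnth. Qed.

Lemma U_cap i k ed : U i ed -> U k ed -> i = k.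
Proof.
case/existsP => j /andP [H1 /eqP E1]; case/existsP => j' /andP [H2 /eqP E2].
move: H2; rewrite (edge_of_inj (etrans E2 (esym E1))) => H2.
case: (i =P k) => // /eqP ik; have := sum_ge2 (F := fun l => x l j) ik H1 H2.
by move/leq_trans => /(_ _ (hxf.1 j)).
Qed.

Lemma U_lb i k : U i (lb T k) -> k = i.
Proof.
have kl : k < size (ten_edges e xI xG T) by apply: leq_trans (ltn_ord k) (size_s T).
have kn : Ordinal kl < n by exact: (ltn_ord k).
have -> : lb T k = edge_of (Ordinal kl).
  by rewrite (edge_of_lb kn); congr lb; apply: val_inj.
rewrite -x_U; case: (k =P i) => // /eqP ki.
by case: hxf => _ [/(_ i (Ordinal kl) kn ki) -> _].
Qed.

Lemma U_lbi i : U i (lb T i).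
Proof.
have Hv : \sum_l x l (widen_ord (size_s T) l) = n.
  apply: etrans _ hxv; apply: eq_bigr => l _.
  by rewrite (big_pred1 (widen_ord (size_s T) l)) // => j; rewrite /= -val_eqE.
have iln : widen_ord (size_s T) i < n by exact: (ltn_ord i).
have := sum_all Hv i; rewrite x_U (edge_of_lb iln).
by have -> : Ordinal iln = i by apply: val_inj.
Qed.

Lemma inflowE i w : inflow x i w = count (fun ed => (ed.2 == w) && U i ed) (s T).
Proof.
rewrite /inflow (eq_bigr (fun j => (U i (edge_of j) : nat))) => [|j _]; last by rewrite x_U.
by rewrite (@sum_edges T (fun ed => ed.2 == w) (U i)).
Qed.

Lemma outflowE i w : outflow x i w = count (fun ed => (ed.1 == w) && U i ed) (s T).
Proof.
rewrite /outflow (eq_bigr (fun j => (U i (edge_of j) : nat))) => [|j _]; last by rewrite x_U.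
by rewrite (@sum_edges T (fun ed => ed.1 == w) (U i)).
Qed.

Lemma in_pos i w : 0 < inflow x i w <-> exists ed, [/\ ed \in s T, U i ed & ed.2 = w].
Proof.
rewrite inflowE -has_count; split.
- by case/hasP => ed edin /andP [/eqP E H]; exists ed.
- by case=> ed [edin H E]; apply/hasP; exists ed; rewrite // E eqxx H.
Qed.

Lemma out_pos i w : 0 < outflow x i w <-> exists ed, [/\ ed \in s T, U i ed & ed.1 = w].
Proof.
rewrite outflowE -has_count; split.
- by case/hasP => ed edin /andP [/eqP E H]; exists ed.
- by case=> ed [edin H E]; apply/hasP; exists ed; rewrite // E eqxx H.
Qed.

Lemma in_out i w : (0 < inflow x i w) = (0 < outflow x i w).
Proof. by case: hxf => _ [_ ->]. Qed.

Lemma cut_perm i (S : pred (tnode V)) :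
  count (fun ed => S ed.1 && U i ed) (s T) = count (fun ed => S ed.2 && U i ed) (s T).
Proof.
set Us := filter (U i) (s T).
have P : perm_eq (map fst Us) (map snd Us).
  apply/allP => w _; apply/eqP.
  rewrite !count_map !count_filter.
  have Hc := (hxf.2.2 w i); rewrite inflowE outflowE in Hc.
  exact: (esym Hc).
have := permP P S; rewrite !count_map !count_filter => H.
by rewrite (@eq_count _ _ (predI (preim fst S) (U i))) // H.
Qed.

Lemma cut i L : 0 < L -> L <= lev (vout (xG i) T) ->
  count (fun ed => (lev ed.1 < L) && ~~ (lev ed.2 < L) && U i ed) (s T) = 1.
Proof.
move=> L0 LT.
have H := cut_perm i (fun nd => lev nd < L).
move: H; rewrite [X in X = _](count_split _ (fun ed => lev ed.2 < L)).
rewrite [X in _ = X](count_split _ (fun ed => lev ed.1 < L)) => H.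
have E1 : count (fun z => (lev z.1 < L) && U i z && (lev z.2 < L)) (s T) =
          count (fun z => (lev z.2 < L) && U i z && (lev z.1 < L)) (s T).
  by apply: eq_count => z /=; case: (lev z.1 < L); case: (lev z.2 < L); case: (U i z).
have E2 : count (fun z => (lev z.2 < L) && U i z && ~~ (lev z.1 < L)) (s T) = 1.
  apply: (@count_one _ _ _ (lb T i)); rewrite ?uniq_s ?inLB //.
  - by rewrite /= U_lbi /lev /= /tag /tim /= L0 andbT -leqNgt LT.
  - move=> z zs /andP [/andP [z2 Uz] z1].
    case: (lev_up zs) => [[k Ek]|up].
    + by move: Uz; rewrite Ek => /U_lb ->.
    + by move: z1; rewrite -leqNgt => z1; have := ltn_trans (leq_ltn_trans z1 up) z2; rewrite ltnn.
rewrite E1 E2 in H.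
have H' : count (fun z => (lev z.1 < L) && U i z && ~~ (lev z.2 < L)) (s T) = 1 by apply: addnI H.
rewrite -H'; apply: eq_count => z /=.
by case: (lev z.1 < L); case: (lev z.2 < L); case: (U i z).
Qed.

Lemma pos0 i v : 0 < inflow x i (vin v 0) -> v = xI i.
Proof.
case/in_pos => ed [edin Ued E].
case: (tgt_vin0 edin E) => k Ek; move: Ued E; rewrite Ek => /U_lb ->.
by rewrite /lb /vin /= => -[].
Qed.

Lemma pos0' i : 0 < inflow x i (vin (xI i) 0).
Proof. by apply/in_pos; exists (lb T i); rewrite inLB U_lbi. Qed.

Lemma out_vin i v t : 0 < t -> 0 < inflow x i (vin v t) -> U i (vin v t, vout v t).
Proof.
move=> t0; rewrite in_out => /out_pos [ed [edin Ued E]].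
by move: Ued; rewrite (src_vin_pos edin E t0).
Qed.

Lemma lev_voutG i : 0 < T -> lev (vout (xG i) T) = 4 * T + 1.
Proof. by move=> T0; rewrite /lev voutE /tag /tim /=; lia. Qed.

Lemma uniq_pos i t v1 v2 : 0 < t <= T ->
  0 < inflow x i (vin v1 t) -> 0 < inflow x i (vin v2 t) -> v1 = v2.
Proof.
move=> /andP [t0 tT] H1 H2.
have U1 := out_vin t0 H1; have U2 := out_vin t0 H2.
case: (v1 =P v2) => // /eqP ne.
have C := @cut i (4 * t + 1) ltac:(lia) ltac:(rewrite lev_voutG; lia).
have : 2 <= count (fun ed => (lev ed.1 < 4 * t + 1) && ~~ (lev ed.2 < 4 * t + 1) && U i ed) (s T).
  apply: (@count_two _ _ _ (vin v1 t, vout v1 t) (vin v2 t, vout v2 t)).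
  - by apply/negP => /eqP [E]; rewrite E eqxx in ne.
  - by apply: U_s U1.
  - by apply: U_s U2.
  - by rewrite U1 /lev /= voutE /tag /tim /=; apply/andP; split; [lia|].
  - by rewrite U2 /lev /= voutE /tag /tim /=; apply/andP; split; [lia|].
by rewrite C.
Qed.

Definition step_concl i v t w :=
  w = v \/ exists p, [/\ p \in gpairs e, U i (gA p.1 p.2 t, gB p.1 p.2 t),
                       v = p.1 \/ v = p.2 & w = p.1 \/ w = p.2].

Lemma out_vout i v t : t < T -> 0 < outflow x i (vout v t) ->
  exists w, 0 < inflow x i (vin w t.+1) /\ step_concl i v t w.
Proof.
move=> tT /out_pos [ed [edin Ued E]].
case: (src_vout edin E tT) => [Ed|[p [pin vp Ed]]].
- exists v; split; last by left.
  by apply/in_pos; exists ed; rewrite Ed; rewrite Ed in edin Ued.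
- have HA : 0 < inflow x i (gA p.1 p.2 t) by apply/in_pos; exists ed; rewrite Ed; rewrite Ed in edin Ued.
  move: HA; rewrite in_out => /out_pos [ed' [edin' Ued' E']].
  case: (src_gA edin' E') => Ed' _.
  have HB : 0 < inflow x i (gB p.1 p.2 t) by apply/in_pos; exists ed'; rewrite Ed'; rewrite Ed' in edin' Ued'.
  move: HB; rewrite in_out => /out_pos [ed'' [edin'' Ued'' E'']].
  have Ug : U i (gA p.1 p.2 t, gB p.1 p.2 t) by rewrite -Ed'.
  case: (src_gB edin'' E'') => Ed''.
  + exists p.1; split; first by apply/in_pos; exists ed''; rewrite Ed''; rewrite Ed'' in edin'' Ued''.
    by right; exists p; split => //; left.
  + exists p.2; split; first by apply/in_pos; exists ed''; rewrite Ed''; rewrite Ed'' in edin'' Ued''.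
    by right; exists p; split => //; right.
Qed.

Lemma step i v t : t < T -> 0 < inflow x i (vin v t) ->
  exists w, 0 < inflow x i (vin w t.+1) /\ step_concl i v t w.
Proof.
move=> tT; case: t tT => [|t] tT H.
- by apply: out_vout => //; rewrite -in_out.
- apply: out_vout => //; rewrite -in_out.
  by apply/in_pos; exists (vin v t.+1, vout v t.+1); rewrite (U_s (out_vin _ H)) ?(out_vin _ H).
Qed.

Lemma exist_pos i t : t <= T -> exists v, 0 < inflow x i (vin v t).
Proof.
elim: t => [_|t IH tT]; first by exists (xI i); apply: pos0'.
case: (IH (ltnW tT)) => v Hv; case: (step tT Hv) => w [Hw _]; by exists w.
Qed.

Lemma uniq_pos' i t v1 v2 : t <= T ->
  0 < inflow x i (vin v1 t) -> 0 < inflow x i (vin v2 t) -> v1 = v2.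
Proof.
case: t => [_ /pos0 -> /pos0 ->//|t tT]; apply: uniq_pos; lia.
Qed.

Lemma extract_eq i t v : t <= T -> 0 < inflow x i (vin v t) -> extract x i t = v.
Proof.
move=> tT H; rewrite /extract tT; case: pickP => [v' H'|none] /=.
- exact: (uniq_pos' tT H' H).
- by move: (none v); rewrite H.
Qed.

Lemma extract_in i t : t <= T -> 0 < inflow x i (vin (extract x i t) t).
Proof. by move=> tT; case: (exist_pos i tT) => v Hv; rewrite (extract_eq tT Hv). Qed.

Lemma endT i : extract x i T = xG i.
Proof.
case: (posnP T) => T0.
- have E0 : extract x i T = xI i.
    apply: extract_eq => //; have -> : vin (xI i) T = vin (xI i) 0 by rewrite T0.
    exact: pos0'.
  rewrite E0.
  have := pos0' i; rewrite in_out => /out_pos [ed [edin Ued E]].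
  move: edin; rewrite T0 => /s0_lb [k Ek].
  have Ek' : ed = lb T k by rewrite Ek T0.
  move: Ued; rewrite Ek' => /U_lb Eki; subst k.
  by move: E; rewrite Ek' /lb voutE /vin T0 /= => -[].
- apply: extract_eq => //.
  have : 0 < outflow x i (vout (xG i) T) by apply/out_pos; exists (lb T i); rewrite inLB U_lbi.
  rewrite -in_out => /in_pos [ed [edin Ued E]].
  move: Ued; rewrite (tgt_vout edin E T0) => Ued.
  by rewrite in_out; apply/out_pos; exists (vin (xG i) T, vout (xG i) T); rewrite (U_s Ued).
Qed.

Lemma extract_after i k : T <= k -> extract x i k = xG i.
Proof.
rewrite leq_eqVlt => /orP [/eqP <-|Tk]; first exact: endT.
by rewrite /extract leqNgt Tk.
Qed.

Lemma extract0 i : extract x i 0 = xI i.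
Proof. exact: (extract_eq (leq0n _) (pos0' i)). Qed.

Lemma gp_uniq p p' u w : p \in gpairs e -> p' \in gpairs e -> u != w ->
  u = p.1 \/ u = p.2 -> w = p.1 \/ w = p.2 ->
  u = p'.1 \/ u = p'.2 -> w = p'.1 \/ w = p'.2 -> p = p'.
Proof.
case: p => a b; case: p' => a' b'; rewrite !gpairsP /= => /andP [r1 _] /andP [r2 _] uw.
by case=> E1; case=> E2; case=> E3; case=> E4; subst;
  try (by rewrite eqxx in uw); try (by have := ltn_trans r1 r2; rewrite ltnn).
Qed.

Lemma extract_mv i k : e (extract x i k) (extract x i k.+1) \/ extract x i k = extract x i k.+1.
Proof.
case: (ltnP k T) => kT; last by right; rewrite !extract_after // (leq_trans kT).
have H := extract_in i (ltnW kT).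
case: (step kT H) => w [Hw C]; rewrite (extract_eq kT Hw).
case: C => [->|[p [pin _ up wp]]]; first by right.
case: (extract x i k =P w) => [->|/eqP ne]; first by right.
left; move: pin; case: p up wp => a b; rewrite gpairsP /= => up wp /andP [_ eab].
by case: up => E1; case: wp => E2; rewrite E1 E2 in ne *;
  [rewrite eqxx in ne| |rewrite e_sym|rewrite eqxx in ne].
Qed.

Lemma extract_vcol i k t : extract x i t = extract x k t -> i = k.
Proof.
case: (ltnP T t) => Tt.
  by rewrite !extract_after ?(ltnW Tt) // => /xG_inj.
case: (posnP t) => [->|t0]; first by rewrite !extract0 => /xI_inj.
move=> E.
have Hi := out_vin t0 (extract_in i Tt).
have Hk := out_vin t0 (extract_in k Tt).
by rewrite E in Hi; apply: U_cap Hi Hk.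
Qed.

Lemma extract_nocol i k : i != k -> ~ collide (extract x i) (extract x k).
Proof.
move=> ik [t [/extract_vcol E|[E1 E2]]]; first by rewrite E eqxx in ik.
case: (ltnP t T) => tT; last first.
  by move: E1; rewrite !extract_after ?(leq_trans tT) // => /xG_inj E; rewrite E eqxx in ik.
case: (extract x i t =P extract x i t.+1) => [Eq|/eqP ne].
  by have := @extract_vcol i k t; rewrite Eq E2 => /(_ erefl) E; rewrite E eqxx in ik.
have Hi := extract_in i (ltnW tT); have Hk := extract_in k (ltnW tT).
case: (step tT Hi) => w [Hw [Ew|[p [pin Up up wp]]]].
  by rewrite (extract_eq tT Hw) Ew eqxx in ne.
case: (step tT Hk) => w' [Hw' [Ew'|[p' [pin' Up' up' wp']]]].
  by rewrite E1 E2 (extract_eq tT Hw') Ew' eqxx in ne.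
have Ew : w = extract x i t.+1 by rewrite (extract_eq tT Hw).
have Ew' : w' = extract x i t by rewrite -(extract_eq tT Hw') E1.
rewrite Ew in wp; rewrite Ew' in wp'; rewrite -E2 in up'.
have pp := gp_uniq pin pin' ne up wp wp' up'.
by move: Up'; rewrite -pp => Up'; have := U_cap Up Up' => E; rewrite E eqxx in ik.
Qed.

End Extract.


Definition goodT (P : 'I_n -> nat -> V) T :=
  [/\ forall i, P i 0 = xI i,
      forall i k, e (P i k) (P i k.+1) \/ P i k = P i k.+1,
      forall i k, T <= k -> P i k = xG i &
      forall i k, i != k -> ~ collide (P i) (P k)].

Lemma kmin_ex (p : nat -> V) g T : (forall k, T <= k -> p k = g) ->
  exists km, is_kmin p g km /\ km <= T.
Proof.
elim: T => [H|T IH H].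
  by exists 0; split => //; split => // k'' _.
case: (p T =P g) => [pT|pT].
- case: IH => [k|km [Hk kT]]; last by exists km; split => //; lia.
  by rewrite leq_eqVlt => /orP [/eqP <-|/H].
- exists T.+1; split => //; split => // k'' Hk''.
  case: (ltnP T k'') => // Tk; exfalso; apply: pT; exact: Hk''.
Qed.

Lemma kmin_le (p : nat -> V) g T km : is_kmin p g km -> (forall k, T <= k -> p k = g) -> km <= T.
Proof. by case=> _ H /H. Qed.

Lemma good_sol P T : goodT P T ->
  is_solution e xI xG P /\ (forall TP, has_makespan xG P TP -> TP <= T).
Proof.
case=> h0 hmv hT hcol; split; first split => // i.
- split; first exact: h0.
  case: (kmin_ex (hT i)) => km [Hk _]; exists km; split; [exact: Hk | move=> k _; exact: hmv].
- move=> TP [km [Hk ->]]; apply/bigmax_leqP => i _; exact: (kmin_le (Hk i) (hT i)).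
Qed.

Lemma sol_mv P i : is_solution e xI xG P -> forall k, e (P i k) (P i k.+1) \/ P i k = P i k.+1.
Proof.
case=> /(_ i) [_ [km [[Hk _] Hmv]]] _ k.
case: (ltnP k km) => kkm; first exact: Hmv.
by right; rewrite !Hk // (leq_trans kkm).
Qed.

Lemma sol_makespan_good P TP : is_solution e xI xG P -> has_makespan xG P TP -> goodT P TP.
Proof.
move=> hs [km [Hk ->]]; split.
- by move=> i; case: hs => /(_ i) [].
- by move=> i; apply: sol_mv.
- move=> i k Hk'; case: (Hk i) => H _; apply: H; apply: leq_trans Hk'.
  exact: (leq_bigmax (F := km) i).
- by case: hs.
Qed.

Lemma fin_bound (Q : 'I_n -> nat -> Prop) :
  (forall i k k', k <= k' -> Q i k -> Q i k') -> (forall i, exists k, Q i k) ->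
  exists K, forall i, Q i K.
Proof.
move=> mono H.
suff : forall m, exists K, forall i : 'I_n, i < m -> Q i K.
  by case/(_ n) => K HK; exists K => i; apply: HK.
elim=> [|m [K HK]]; first by exists 0.
case: (ltnP m n) => mn; last by exists K => i im; apply: HK; have := ltn_ord i; lia.
case: (H (Ordinal mn)) => k Hk; exists (maxn K k) => i; rewrite ltnS leq_eqVlt => /orP [/eqP E|im].
- have -> : i = Ordinal mn by apply: val_inj.
  exact: mono (leq_maxr _ _) Hk.
- exact: mono (leq_maxl _ _) (HK _ im).
Qed.

Lemma sol_good P : is_solution e xI xG P -> exists T, goodT P T.
Proof.
move=> hs.
have [K HK] : exists K, forall i, forall k, K <= k -> P i k = xG i.
  apply: (fin_bound (Q := fun i K => forall k, K <= k -> P i k = xG i)).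
  - by move=> i k k' kk' H k'' Hk''; apply: H; apply: leq_trans Hk''.
  - move=> i; case: hs => /(_ i) [_ [km [[Hk _] _]]] _; by exists km.
exists K; split => //.
- by move=> i; case: hs => /(_ i) [].
- by move=> i; apply: sol_mv.
- by case: hs.
Qed.

Lemma walk_ext k u v w : walk e k u v -> e v w -> walk e k.+1 u w.
Proof.
elim: k u => [|k IH] u.
- by rewrite /= => /eqP -> evw; apply/existsP; exists w; rewrite evw eqxx.
- move=> /existsP [w' /andP [euw' Hw]] evw; apply/existsP; exists w'.
  by rewrite euw'; apply: IH.
Qed.

Lemma path_walk (q : nat -> V) : (forall k, e (q k) (q k.+1) \/ q k = q k.+1) ->
  forall k, exists2 l, l <= k & walk e l (q 0) (q k).
Proof.
move=> hmv; elim=> [|k [l lk Hl]]; first by exists 0 => //=.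
case: (hmv k) => [ek|<-]; first by exists l.+1; [lia|apply: walk_ext Hl ek].
by exists l => //; lia.
Qed.

Lemma dist_le l u v : walk e l u v -> dist e u v <= l.
Proof.
move=> H; rewrite /dist.
case: (ltnP l #|V|) => lV; last by apply: leq_trans (find_size _ _) _; rewrite size_iota.
rewrite leqNgt; apply/negP => /(before_find 0).
by rewrite nth_iota // add0n H.
Qed.

Lemma Tstart_le P T : goodT P T -> T_start e xI xG <= T.
Proof.
case=> h0 hmv hT _; apply/bigmax_leqP => i _.
case: (path_walk (hmv i) T) => l lT Hw.
by move: Hw; rewrite h0 hT // => /dist_le /leq_trans; apply.
Qed.


(** * Bounding the makespan by the number of configurations *)
Lemma cut_loop P T : goodT P T -> #|V| ^ n < T -> exists P' T', goodT P' T' /\ T' < T.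
Proof.
move=> [h0 hmv hT hcol] NT.
pose N := #|V| ^ n.
pose f := fun t : 'I_N.+1 => [ffun i => P i t].
have : ~~ injectiveb f.
  apply/negP => /injectiveP inj; have := leq_card f inj.
  by rewrite card_ord card_ffun card_ord; lia.
case/injectivePn => a [b ab fab].
have [a0 [b0 [ab0 b0N Hc]]] : exists a0 b0, [/\ a0 < b0, b0 <= N & forall i, P i a0 = P i b0].
  have Hc : forall i, P i a = P i b.
    by move=> i; have := congr1 (fun g : {ffun 'I_n -> V} => g i) fab; rewrite /f !ffunE.
  case: (ltngtP a b) => H.
  - exists (val a), (val b); split; [exact: H | rewrite -ltnS; exact: ltn_ord | exact: Hc].
  - exists (val b), (val a); split; [exact: H | rewrite -ltnS; exact: ltn_ord | by move=> i; rewrite Hc].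
  - by move/val_inj: H => H; rewrite H eqxx in ab.
pose d := b0 - a0.
pose Q := fun i t => if t <= a0 then P i t else P i (t + d).
have key : forall t, exists t', forall i, Q i t = P i t' /\ Q i t.+1 = P i t'.+1.
  move=> t; case: (ltnP t a0) => ta.
  - by exists t => i; rewrite /Q ltnW // ta.
  - exists (t + d) => i; rewrite /Q.
    have -> : (t.+1 <= a0) = false by apply/negbTE; rewrite -ltnNge ltnS.
    rewrite addSn; split => //.
    case: ifP => // ta'; have -> : t = a0 by apply/eqP; rewrite eqn_leq ta ta'.
    by rewrite Hc /d subnKC // ltnW.
exists Q, (T - d); split; last by rewrite /d; lia.
split.
- by move=> i; rewrite /Q leq0n.
- move=> i t; case: (key t) => t' /(_ i) [-> ->]; exact: hmv.
- move=> i k Hk; rewrite /Q; case: ifP => ka.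
  + exfalso; rewrite /d in Hk; lia.
  + by apply: hT; rewrite /d in Hk *; lia.
- move=> i k ik [t Ht]; apply: (hcol _ _ ik); case: (key t) => t' Ht'.
  exists t'; case: (Ht' i) => [E1 E2]; case: (Ht' k) => [E3 E4].
  by rewrite -E1 -E2 -E3 -E4.
Qed.

Lemma bounded P T : goodT P T -> exists P' T', goodT P' T' /\ T' <= #|V| ^ n.
Proof.
elim/ltn_ind: T P => T IH P hP.
case: (leqP T (#|V| ^ n)) => TN; first by exists P, T.
case: (cut_loop hP TN) => P' [T' [hP' T'T]]; exact: IH T'T P' hP'.
Qed.


Section Alg.
Variable (solve : forall T : nat, ilp_var e xI xG T).
Variable (solve_opt : forall T : nat, ilp_optimal (@solve T)).

Lemma value_le T (x : ilp_var e xI xG T) : ilp_value x <= n.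
Proof.
have -> : ilp_value x = \sum_l x l (widen_ord (size_s T) l).
  apply: eq_bigr => l _.
  by rewrite (big_pred1 (widen_ord (size_s T) l)) // => j; rewrite /= -val_eqE.
rewrite -[X in _ <= X]card_ord -sum1_card; apply: leq_sum => l _; exact: leq_b1.
Qed.

Lemma good_ok T P : goodT P T -> ilp_value (@solve T) = n.
Proof.
case=> h0 hmv hT hcol.
apply/eqP; rewrite eqn_leq value_le /=.
rewrite -{1}(yflow_value h0 hT).
by case: (solve_opt T) => _; apply; apply: yflow_feasible.
Qed.

Lemma ok_good T : ilp_value (@solve T) = n -> goodT (extract (@solve T)) T.
Proof.
move=> hv; have hf := (solve_opt T).1; split.
- exact: extract0 hf hv.
- exact: extract_mv hf hv.
- exact: extract_after hf hv.
- exact: extract_nocol hf hv.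
Qed.

Lemma run_spec f T : (forall P T', goodT P T' -> T <= T') ->
  match tompp_run (@solve) f T with
  | Some P => exists T0, goodT P T0 /\ (forall P' T', goodT P' T' -> T0 <= T')
  | None => forall P T', goodT P T' -> T + f < T'
  end.
Proof.
elim: f T => [|f IH] T H /=; case: ifP => [/eqP ok|nok].
- by exists T; split => //; apply: ok_good.
- move=> P T' hP; rewrite addn0 ltn_neqAle (H _ _ hP) andbT.
  apply/eqP => E; subst T'; by rewrite (good_ok hP) eqxx in nok.
- by exists T; split => //; apply: ok_good.
- have H' : forall P T', goodT P T' -> T.+1 <= T'.
    move=> P T' hP; rewrite ltn_neqAle (H _ _ hP) andbT.
    apply/eqP => E; subst T'; by rewrite (good_ok hP) eqxx in nok.
  move: (IH _ H'); case: (tompp_run (@solve) f T.+1) => // IH' P T' hP.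
  by rewrite addnS -addSn; apply: IH' hP.
Qed.

Lemma main_sec :
  match tompp (@solve) with
  | Some P =>
      is_solution e xI xG P /\
      (forall (P' : 'I_n -> nat -> V) (TP TP' : nat),
          is_solution e xI xG P' -> has_makespan xG P TP -> has_makespan xG P' TP' ->
          TP <= TP')
  | None => ~ (exists P : 'I_n -> nat -> V, is_solution e xI xG P)
  end.
Proof.
rewrite /tompp; case: ifP => hb.
- have := @run_spec (T_bound V n - T_start e xI xG) (T_start e xI xG) (fun P T' => @Tstart_le P T').
  case: (tompp_run _ _ _) => [P [T0 [hP hmin]]|none].
  + case: (good_sol hP) => hs hmk; split => // P' TP TP' hs' hm hm'.
    apply: leq_trans (hmk _ hm) _; apply: hmin; exact: sol_makespan_good hs' hm'.
  + case=> P /sol_good [T hP]; case: (bounded hP) => P' [T' [hP' T'b]].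
    have := none _ _ hP'; rewrite subnKC //; rewrite /T_bound in T'b *; lia.
- case=> P /sol_good [T hP]; case: (bounded hP) => P' [T' [hP' T'b]].
  have := Tstart_le hP'; move: hb; rewrite /T_bound; lia.
Qed.

End Alg.

End Main.

Theorem proposition1 (V : finType) (e : rel V)
  (e_sym : symmetric e) (e_irr : irreflexive e)
  (e_conn : forall u v : V, connect e u v)
  (n : nat) (xI xG : 'I_n -> V) (xI_inj : injective xI) (xG_inj : injective xG)
  (solve : forall T : nat, ilp_var e xI xG T)
  (solve_opt : forall T : nat, ilp_optimal (solve T)) :
  match tompp solve with
  | Some P =>
      is_solution e xI xG P /\
      (forall (P' : 'I_n -> nat -> V) (TP TP' : nat),
          is_solution e xI xG P' -> has_makespan xG P TP -> has_makespan xG P' TP' ->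
          TP <= TP')
  | None => ~ (exists P : 'I_n -> nat -> V, is_solution e xI xG P)
  end.
Proof. by apply: main_sec. Qed.
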